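(* Let $M$ and $N$ be weight sequences with $m_k^{1/k}\to\infty$, $n_k^{1/k}\to\infty$, and such that there is $C\ge1$ with $M_{k+j}\le C^{k+j}N_jN_k$ for all $j,k\in\mathbb{N}$. Then there is $D\ge1$ such that $h_m(t)\le h_n(Dt)^2$ for all $t>0$.
   Context: A weight sequence is given by an increasing sequence $1=\mu_0\le\mu_1\le\cdots$ via $M_k=\mu_0\cdots\mu_k=k!\,m_k$, with $M_k^{1/k}\to\infty$; analogously $N\leftrightarrow n$. For a positive sequence $m$ with $m_0=1$, $h_m(t)=\inf_{k\in\mathbb{N}}m_kt^k$ for $t>0$. *)

(* Defs.v *)
From Stdlib Require Import Reals Lra ClassicalEpsilon Factorial.
Open Scope R_scope.

Definition Mseq (mu : nat -> R) (k : nat) : R := prod_f_R0 mu k.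

Definition mseq (mu : nat -> R) (k : nat) : R := Mseq mu k / INR (fact k).

(* k-th root of a_k (value at k = 0 irrelevant for limits) *)
Definition kroot (a : nat -> R) (k : nat) : R := Rpower (a k) (/ INR k).

Definition weight_seq (mu : nat -> R) : Prop :=
  mu 0%nat = 1 /\ (forall k, mu k <= mu (S k)) /\ cv_infty (kroot (Mseq mu)).

Definition is_glb (S : R -> Prop) (a : R) : Prop :=
  (forall x, S x -> a <= x) /\ (forall b, (forall x, S x -> b <= x) -> b <= a).

Definition h (m : nat -> R) (t : R) : R :=
  epsilon (inhabits 0) (fun a => is_glb (fun x => exists k, x = m k * t ^ k) a).

(* Main.v *)
Require Import Defs.
From Stdlib Require Import Reals Lra Lia Psatz ClassicalEpsilon Factorial.
Open Scope R_scope.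

Lemma glb_exists (m : nat -> R) (t : R) :
  (forall k, 0 <= m k * t ^ k) ->
  exists a, is_glb (fun x => exists k, x = m k * t ^ k) a.
Proof.
  intros Hpos.
  set (E := fun y => exists k, y = - (m k * t ^ k)).
  assert (Hb : bound E).
  { exists 0. intros y [k ->]. specialize (Hpos k). lra. }
  assert (Hne : exists y, E y). { exists (- (m 0%nat * t ^ 0)). exists 0%nat. reflexivity. }
  destruct (completeness E Hb Hne) as [l [Hl1 Hl2]].
  exists (- l). split.
  - intros x [k ->]. assert (E (- (m k * t ^ k))) by (exists k; reflexivity).
    specialize (Hl1 _ H). lra.
  - intros b Hbd. assert (l <= - b); [|lra].
    apply Hl2. intros y [k ->]. specialize (Hbd (m k * t ^ k) (ex_intro _ k eq_refl)). lra.
Qed.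

Lemma h_spec (m : nat -> R) (t : R) :
  (forall k, 0 <= m k * t ^ k) ->
  is_glb (fun x => exists k, x = m k * t ^ k) (h m t).
Proof.
  intros Hpos. unfold h.
  apply (epsilon_spec (inhabits 0) (fun a => is_glb _ a)).
  apply glb_exists; auto.
Qed.

Lemma mu_ge1 (mu : nat -> R) : weight_seq mu -> forall k, 1 <= mu k.
Proof.
  intros [H0 [Hinc _]] k. induction k. lra. specialize (Hinc k). lra.
Qed.

Lemma M_ge1 (mu : nat -> R) : weight_seq mu -> forall k, 1 <= Mseq mu k.
Proof.
  intros Hw k. unfold Mseq. induction k; simpl.
  - apply mu_ge1; auto.
  - pose proof (mu_ge1 mu Hw (S k)). nra.
Qed.

Lemma fact_add (k j : nat) : (fact k * fact j <= fact (k + j))%nat.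
Proof.
  induction j.
  - rewrite Nat.add_0_r. simpl. lia.
  - rewrite Nat.add_succ_r. simpl. nia.
Qed.

Lemma m_pos (mu : nat -> R) : weight_seq mu -> forall k, 0 < mseq mu k.
Proof.
  intros Hw k. unfold mseq. pose proof (M_ge1 mu Hw k).
  pose proof (lt_INR 0 _ (lt_O_fact k)). simpl in H0.
  apply Rdiv_lt_0_compat; lra.
Qed.

Theorem lemma3p13 (mu nu : nat -> R)
  (Hmu : weight_seq mu) (Hnu : weight_seq nu)
  (Hm : cv_infty (kroot (mseq mu))) (Hn : cv_infty (kroot (mseq nu)))
  (C : R) (HC : 1 <= C)
  (HMN : forall j k : nat, Mseq mu (k + j) <= C ^ (k + j) * Mseq nu j * Mseq nu k) :
  exists D : R, 1 <= D /\
    forall t : R, 0 < t -> h (mseq mu) t <= (h (mseq nu) (D * t)) ^ 2.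
Proof.
  exists C. split; [lra|]. intros t Ht.
  assert (Hposm : forall k, 0 <= mseq mu k * t ^ k).
  { intro k. pose proof (m_pos mu Hmu k). pose proof (pow_lt t k Ht). nra. }
  assert (Hposn : forall k, 0 <= mseq nu k * (C * t) ^ k).
  { intro k. pose proof (m_pos nu Hnu k). assert (0 < C * t) by nra.
    pose proof (pow_lt (C*t) k H0). nra. }
  destruct (h_spec _ _ Hposm) as [Hb1 _].
  destruct (h_spec _ _ Hposn) as [Ha1 Ha2].
  set (b := h (mseq mu) t) in *. set (a := h (mseq nu) (C * t)) in *.
  assert (Ha0 : 0 <= a).
  { apply Ha2. intros x [k ->]. apply Hposn. }
  assert (Key : forall k, b <= (mseq nu k * (C * t) ^ k) ^ 2).
  { intro k. apply Rle_trans with (mseq mu (k + k) * t ^ (k + k)).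
    { apply Hb1. exists (k + k)%nat. reflexivity. }
    assert (Hf : (fact k * fact k <= fact (k + k))%nat) by apply fact_add.
    apply le_INR in Hf. rewrite mult_INR in Hf.
    pose proof (lt_INR 0 _ (lt_O_fact k)) as Hfk. simpl in Hfk.
    pose proof (HMN k k) as HM.
    pose proof (M_ge1 nu Hnu k) as HN.
    pose proof (M_ge1 mu Hmu (k + k)) as HMM.
    pose proof (pow_lt t (k + k) Ht) as Htp.
    assert (HCp : 0 < C ^ (k + k)) by (apply pow_lt; lra).
    assert (Hmm : mseq mu (k + k) <= C ^ (k + k) * (mseq nu k) ^ 2).
    { unfold mseq. set (F := INR (fact (k + k))) in *. set (f := INR (fact k)) in *.
      assert (0 < F) by nra.
      apply Rmult_le_reg_r with F; [lra|].
      unfold Rdiv. rewrite Rmult_assoc, Rinv_l by lra. rewrite Rmult_1_r.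
      replace (C ^ (k + k) * (Mseq nu k * / f) ^ 2 * F)
        with (C ^ (k + k) * (Mseq nu k) ^ 2 * (F / (f * f))) by (field; lra).
      assert (1 <= F / (f * f)).
      { apply Rmult_le_reg_r with (f * f); [nra|].
        unfold Rdiv. rewrite Rmult_assoc, Rinv_l by nra. lra. }
      assert (0 < C ^ (k + k) * Mseq nu k ^ 2) by nra.
      nra. }
    replace ((mseq nu k * (C * t) ^ k) ^ 2)
      with (C ^ (k + k) * (mseq nu k) ^ 2 * t ^ (k + k))
      by (rewrite !pow_add, (Rpow_mult_distr C t k); ring).
    apply Rmult_le_compat_r; lra. }
  destruct (Rle_lt_dec b 0) as [Hb0|Hb0]; [nra|].
  assert (Hs : sqrt b <= a).
  { apply Ha2. intros x [k ->]. specialize (Key k). specialize (Hposn k).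
    rewrite <- (sqrt_pow2 (mseq nu k * (C * t) ^ k)) by lra.
    apply sqrt_le_1_alt; lra. }
  pose proof (sqrt_pos b). pose proof (pow2_sqrt b).
  assert (sqrt b ^ 2 <= a ^ 2) by (apply pow_incr; lra).
  rewrite H0 in H1 by lra. lra.
Qed.
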